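(* Let $(\rho,\mu,\nu)$ be a regular triple of standard representations of $\mathcal{W}_N$ and $R=R(\rho,\mu,\nu)$. Then, as $N^2\times N^2$ matrices, with $Z_1=Z\otimes\mathrm{id}$, $Z_2=\mathrm{id}\otimes Z$, $Y_1=Y\otimes\mathrm{id}$, $Y_2=\mathrm{id}\otimes Y$: $$(C_1)\ R\,Z_1Y_2=Z_1Y_2\,R,\qquad (C_2)\ R\,Y_1=Y_1Y_2\,R,\qquad (C_3)\ R\,Z_1Z_2=Z_2\,R.$$
   Context: $N\ge3$ odd, $N=2P+1$, $\omega=e^{2\pi i/N}$; for integers $r$, $\omega^{r/2}:=(\omega^{P+1})^r$. Indices run over $\mathbb{Z}/N$; $\delta(n)=1$ if $n\equiv0\pmod N$, else $0$. $X_{ij}=\delta(i-j-1)$, $Z_{ij}=\omega^i\delta(i-j)$, $Y=\omega^{1/2}XZ$, i.e. $Y_{ij}=\omega^{1/2+j}\delta(i-j-1)$. $\mathcal{W}_N$: unital $\mathbb{C}$-algebra generated by $E,E^{-1},D$ with $EE^{-1}=E^{-1}E=1$, $ED=\omega DE$, $\Delta(E)=E\otimes E$, $\Delta(D)=E\otimes D+D\otimes1$; tensor products via $\Delta$; cyclic = $E,D$ act invertibly; regular = every tensor product of consecutive terms cyclic. Standard representation with parameters $(a_\rho,y_\rho)\in(\mathbb{C}^* )^2$: $\rho(E)=a_\rho^2Z$, $\rho(D)=a_\rho y_\rho X$. A determination $u\mapsto u^{1/N}$ of the $N$-th root is fixed; $\rho\mu$ has $a_{\rho\mu}=a_\rho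 a_\mu$, $y_{\rho\mu}=(a_\rho^Ny_\mu^N+y_\rho^Na_\mu^{-N})^{1/N}$; products are associative. Standing convention: $-\frac{y_\rho y_\nu}{y_{\rho\mu\nu}y_\mu}=r\big(\frac{y_{\rho\mu}y_{\mu\nu}}{y_{\rho\mu\nu}y_\mu}\big)$. Functions: for $x^N+y^N=z^N$, $\omega(x,y,z|n)=\prod_{j=1}^n\frac{y}{z-x\omega^j}$ ($0\le n\le N-1$), extended $N$-periodically; $\omega(x,y,z|m,n)=\omega(x,y,z|m-n)\omega^{n^2/2}$. $g(x)=\prod_{j=1}^{N-1}(1-x\omega^j)^{j/N}$, $r(x)=(1-x^N)^{1/N}$ (analytic continuations from $0$ to $\mathbb{C}\setminus\{|x|\ge1,\arg x\in\theta+\frac{2\pi}{N}\mathbb{Z}\}$, $\theta$ fixed so $g$ avoids the cuts); $h(x)=x^{-P}g(x)/g(1)$. $6j$-symbol: $R(\rho,\mu,\nu)^{\gamma,\delta}_{\alpha,\beta}=h\big(\frac{y_{\rho\mu}y_{\mu\nu}}{y_{\rho\mu\nu}y_\mu}\big)\omega^{\alpha\delta}\omega(y_{\rho\mu\nu}y_\mu,y_\rho y_\nu,y_{\rho\mu}y_{\mu\nu}|\gamma,\alpha)\delta(\gamma+\delta-\beta)$. Matrix convention: an array $M^{\gamma,\delta}_{\alpha,\beta}$ is the $N^2\times N^2$ matrix with entry $M^{\gamma,\delta}_{\alpha,\beta}$ in row $(\alpha,\beta)$, column $(\gamma,\delta)$; $A\otimes B$ has entry $A_{\alpha\gamma}B_{\beta\delta}$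 there; products are matrix products. *)

(* Defs.v *)
From HB Require Import structures.
From mathcomp Require Import all_boot all_order all_algebra.
From mathcomp Require Import reals sequences exp trigo.
From mathcomp Require Import complex mxtens.

Set Implicit Arguments.
Unset Strict Implicit.
Unset Printing Implicit Defensive.
Import Order.TTheory GRing.Theory Num.Theory.
Local Open Scope ring_scope.
Local Open Scope complex_scope.

Section W6j.
Variable R : realType.
Local Notation C := R[i].
Variable N : nat.

Definition omega : C := (cos (2 * pi / N%:R)) +i* (sin (2 * pi / N%:R)).

(* P with N = 2P+1 *)
Definition Phalf : nat := N./2.

(* omega^{r/2} := (omega^{P+1})^r, r an integer *)
Definition omega_half (r : int) : C := (omega ^+ Phalf.+1) ^ r.

Definition deltaN (n : int) : C := if (n %% N%:Z)%Z == 0 then 1 else 0.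

(* the N x N matrices X, Z, Y (indices 0..N-1 representing Z/N) *)
Definition Xmat : 'M[C]_N := \matrix_(i, j) deltaN (i%:Z - j%:Z - 1).
Definition Zmat : 'M[C]_N := \matrix_(i, j) (omega ^+ i * deltaN (i%:Z - j%:Z)).
Definition Ymat : 'M[C]_N :=
  \matrix_(i, j) (omega_half 1 * omega ^+ j * deltaN (i%:Z - j%:Z - 1)).

(* A representation of W_N on C^n, given by the images (rho(E), rho(D)). *)
Definition rep (n : nat) := ('M[C]_n * 'M[C]_n)%type.

Definition std_rep (a y : C) : rep N := (a ^+ 2 *: Zmat, (a * y) *: Xmat).

(* tensor product via the coproduct Delta(E) = E (x) E, Delta(D) = E (x) D + D (x) 1 *)
Definition tens_rep m n (r1 : rep m) (r2 : rep n) : rep (m * n) :=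
  (r1.1 *t r2.1, r1.1 *t r2.2 + r1.2 *t (1%:M : 'M[C]_n)).

Definition cyclic_rep n (r : rep n) : Prop := r.1 \in unitmx /\ r.2 \in unitmx.

Definition regular_triple (ar yr am ym an yn : C) : Prop :=
  let rho := std_rep ar yr in let mu := std_rep am ym in let nu := std_rep an yn in
  cyclic_rep rho /\ cyclic_rep mu /\ cyclic_rep nu /\
  cyclic_rep (tens_rep rho mu) /\ cyclic_rep (tens_rep mu nu) /\
  cyclic_rep (tens_rep (tens_rep rho mu) nu).

(* parameter y of the product rho mu, for a fixed determination nroot of u^{1/N} *)
Definition yprod (nroot : C -> C) (a1 y1 a2 y2 : C) : C :=
  nroot (a1 ^+ N * y2 ^+ N + y1 ^+ N * a2 ^- N).

Definition re_c (w : C) : R := let: a +i* _ := w in a.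
Definition im_c (w : C) : R := let: _ +i* b := w in b.
Definition abs_c (w : C) : R := Num.sqrt (re_c w ^+ 2 + im_c w ^+ 2).
Definition cexp (w : C) : C :=
  (expR (re_c w) * cos (im_c w)) +i* (expR (re_c w) * sin (im_c w)).
(* principal argument in (-pi, pi] *)
Definition Argc (w : C) : R :=
  if im_c w < 0 then - acos (re_c w / abs_c w) else acos (re_c w / abs_c w).
Definition Logc (w : C) : C := (ln (abs_c w)) +i* (Argc w).
(* principal power w^c (and 0^c := 0) *)
Definition cpow (w c : C) : C := if w == 0 then 0 else cexp (c * Logc w).

Definition r_fun (x : C) : C := cpow (1 - x ^+ N) (N%:R^-1).
Definition g_fun (x : C) : C :=
  \prod_(1 <= j < N) cpow (1 - x * omega ^+ j) (j%:R / N%:R).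
Definition h_fun (x : C) : C := x ^- Phalf * g_fun x / g_fun 1.

Definition wfun (x y z : C) (n : int) : C :=
  \prod_(1 <= j < (absz (n %% N%:Z)%Z).+1) (y / (z - x * omega ^+ j)).
Definition wfun2 (x y z : C) (m n : int) : C :=
  wfun x y z (m - n) * omega_half (n ^+ 2).

(* The 6j-symbol R(rho,mu,nu) as an N^2 x N^2 matrix: entry in row (alpha,beta),
   column (gamma,delta), pairs encoded by mxtens_index (same convention as *t). *)
Definition R6j (nroot : C -> C) (ar yr am ym an yn : C) : 'M[C]_(N * N) :=
  let yrm := yprod nroot ar yr am ym in
  let ymn := yprod nroot am ym an yn in
  let yrmn := yprod nroot (ar * am) yrm an yn in
  let X := yrmn * ym in let Y := yr * yn in let Z := yrm * ymn in
  \matrix_(i, j)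
    (let ab := mxtens_unindex (m := N) (n := N) i in
     let cd := mxtens_unindex (m := N) (n := N) j in
     let al : int := ab.1 in let be : int := ab.2 in
     let ga : int := cd.1 in let de : int := cd.2 in
     h_fun (Z / X) * omega ^ (al * de) * wfun2 X Y Z ga al * deltaN (ga + de - be)).

Definition standing_convention (nroot : C -> C) (ar yr am ym an yn : C) : Prop :=
  let yrm := yprod nroot ar yr am ym in
  let ymn := yprod nroot am ym an yn in
  let yrmn := yprod nroot (ar * am) yrm an yn in
  - (yr * yn) / (yrmn * ym) = r_fun (yrm * ymn / (yrmn * ym)).

End W6j.

(* Main.v *)
Require Import Defs.
From HB Require Import structures.
From mathcomp Require Import all_boot all_order all_algebra.
From mathcomp Require Import reals sequences exp trigo.
From mathcomp Require Import complex mxtens.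
From mathcomp Require Import ring lra.
Import GRing.Theory Num.Theory.
Local Open Scope ring_scope.
Local Open Scope complex_scope.

Lemma omega_pow (R : realType) (N : nat) k :
  omega R N ^+ k = cos (2 * pi / N%:R *+ k) +i* sin (2 * pi / N%:R *+ k).
Proof.
rewrite /omega; set t := 2 * pi / N%:R.
elim: k => [|k IH]; first by rewrite expr0 !mulr0n cos0 sin0.
rewrite exprSr IH [t *+ k.+1]mulrSr cosD sinD.
simpl. congr (_ +i* _); ring.
Qed.

Lemma omegaN (R : realType) (N : nat) : (0 < N)%N -> omega R N ^+ N = 1.
Proof.
move=> N0; rewrite omega_pow.
have -> : 2 * pi / N%:R *+ N = pi *+ 2 :> R.
  rewrite -mulr_natr -mulrA mulVf ?pnatr_eq0 -?lt0n // mulr1 mulr_natl; by [].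
by rewrite cos2pi sin2pi.
Qed.

Section Aux.
Variable R : realType.
Variable N : nat.
Hypothesis N0 : (0 < N)%N.
Local Notation C := R[i].
Local Notation om := (omega R N).
Local Notation dl := (deltaN R N).

Lemma Nz : (N%:Z != 0).
Proof. by rewrite eqz_nat -lt0n. Qed.

Lemma powz_cong (u : C) : u ^+ N = 1 -> forall x y : int,
  (N%:Z %| x - y)%Z -> u ^ x = u ^ y.
Proof.
move=> uN x y /dvdzP [q Hq].
have u0 : u != 0.
  apply/negP => /eqP u0; move: uN; rewrite u0 expr0n; case: N N0 => // n _ /eqP.
  by rewrite eq_sym oner_eq0.
have -> : x = y + N%:Z * q by rewrite mulrC -Hq; ring.
by rewrite expfzDr // -exprz_exp -exprnP uN exp1rz mulr1.
Qed.

Lemma omN : om ^+ N = 1. Proof. exact: omegaN. Qed.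

Lemma om_cong (x y : int) : (N%:Z %| x - y)%Z -> om ^ x = om ^ y.
Proof. exact: (powz_cong _ omN). Qed.

Lemma om0 : om != 0.
Proof.
apply/negP => /eqP u0; have := omN; rewrite u0 expr0n; case: N N0 => // n _ /eqP.
by rewrite eq_sym oner_eq0.
Qed.

Lemma deltaNE n : dl n = if (N%:Z %| n)%Z then 1 else 0.
Proof.
rewrite /deltaN; have -> : ((n %% N)%Z == 0) = (N%:Z %| n)%Z by apply/eqP/dvdz_mod0P.
by [].
Qed.

Lemma dl_cong x y : (N%:Z %| x - y)%Z -> dl x = dl y.
Proof.
move=> H; rewrite !deltaNE.
have -> : x = (x - y) + y by ring.
by rewrite (rpredDl _ H).
Qed.

Lemma dlN x : dl (- x) = dl x.
Proof. by rewrite !deltaNE rpredN. Qed.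

Lemma ord_cong (k k' : 'I_N) : (N%:Z %| k%:Z - k'%:Z)%Z -> k = k'.
Proof.
rewrite -eqz_mod_dvd => /eqP; rewrite !modz_small; last first.
- by rewrite lez_nat ltz_nat ltn_ord.
- by rewrite lez_nat ltz_nat ltn_ord.
by move=> [] /val_inj.
Qed.

Definition per (F : int -> C) := forall x y, (N%:Z %| x - y)%Z -> F x = F y.

Lemma sum_delta (F : int -> C) (c : int) : per F ->
  \sum_(k < N) F k * dl (k%:Z - c) = F c.
Proof.
move=> PF.
have c0 : 0 <= (c %% N)%Z by rewrite modz_ge0 // Nz.
have lt0 : (absz (c %% N)%Z < N)%N.
  by rewrite -ltz_nat gez0_abs // ltz_pmod // ltz_nat.
pose k0 : 'I_N := Ordinal lt0.
have k0E : (k0 : int) = (c %% N)%Z by rewrite /= gez0_abs.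
have dk0 : (N%:Z %| k0%:Z - c)%Z.
  rewrite k0E; apply/dvdzP; exists (- (c %/ N)%Z).
  move: (divz_eq c N); set q := (c %/ N)%Z; set r := (c %% N)%Z => E.
  by rewrite [in LHS]E; ring.
rewrite (bigD1 k0) //= big1 ?addr0.
  by rewrite deltaNE dk0 mulr1; apply: PF.
move=> k nk; rewrite deltaNE; case: ifP => [H|]; last by rewrite mulr0.
exfalso; move/negP: nk; apply; apply/eqP; apply: ord_cong.
have -> : k%:Z - k0%:Z = (k%:Z - c) - (k0%:Z - c) by ring.
by rewrite rpredB.
Qed.

Lemma sum_tens (F : 'I_(N * N) -> C) :
  \sum_i F i = \sum_(a < N) \sum_(b < N) F (mxtens_index (a, b)).
Proof.
rewrite pair_big /= (reindex (@mxtens_index N N)) /=.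
  by apply: eq_bigr => -[a b].
by exists (@mxtens_unindex N N) => i _; rewrite (mxtens_indexK, mxtens_unindexK).
Qed.


Lemma dlS (x y s : int) : dl (x - y - s) = dl (y - (x - s)).
Proof. by rewrite -dlN; congr (dl _); ring. Qed.

Lemma mul_right (M : 'M[C]_(N * N)) (F : int -> int -> int -> int -> C)
    (A B : 'M[C]_N) (gA gB : int -> int -> C) (sA sB : int) :
  (forall a b c d : 'I_N, M (mxtens_index (a, b)) (mxtens_index (c, d)) = F a b c d) ->
  (forall a c : 'I_N, A a c = gA a c * dl (a%:Z - c%:Z - sA)) ->
  (forall a c : 'I_N, B a c = gB a c * dl (a%:Z - c%:Z - sB)) ->
  (forall a b d, per (fun c => F a b c d)) -> (forall a b c, per (F a b c)) ->
  (forall c, per (fun a => gA a c)) -> (forall c, per (fun a => gB a c)) ->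
  forall a b c d : 'I_N,
  (M *m (A *t B)) (mxtens_index (a, b)) (mxtens_index (c, d)) =
    F a b (c%:Z + sA) (d%:Z + sB) * gA (c%:Z + sA) c * gB (d%:Z + sB) d.
Proof.
move=> HM HA HB P3 P4 PA PB a b c d.
rewrite mxE sum_tens.
transitivity (\sum_(a' < N) (gA a' c * (F a b a' (d%:Z + sB) * gB (d%:Z + sB) d))
                 * dl (a'%:Z - (c%:Z + sA))).
  apply: eq_bigr => a' _.
  have E := sum_delta (fun y => F a b a' y * gB y d) (d%:Z + sB).
  cbv beta in E; rewrite -E; last by move=> x y H; rewrite (P4 _ _ _ _ _ H) (PB _ _ _ H).
  rewrite mulr_sumr mulr_suml; apply: eq_bigr => b' _.
  rewrite HM tensmxE HA HB !opprD !addrA; ring.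
have E := sum_delta (fun x => gA x c * (F a b x (d%:Z + sB) * gB (d%:Z + sB) d)) (c%:Z + sA).
cbv beta in E; rewrite E; first ring.
by move=> x y H; rewrite (PA _ _ _ H) (P3 _ _ _ _ _ H).
Qed.

Lemma mul_left (M : 'M[C]_(N * N)) (F : int -> int -> int -> int -> C)
    (A B : 'M[C]_N) (gA gB : int -> int -> C) (sA sB : int) :
  (forall a b c d : 'I_N, M (mxtens_index (a, b)) (mxtens_index (c, d)) = F a b c d) ->
  (forall a c : 'I_N, A a c = gA a c * dl (a%:Z - c%:Z - sA)) ->
  (forall a c : 'I_N, B a c = gB a c * dl (a%:Z - c%:Z - sB)) ->
  (forall b c d, per (fun a => F a b c d)) -> (forall a c d, per (fun b => F a b c d)) ->
  (forall a, per (gA a)) -> (forall a, per (gB a)) ->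
  forall a b c d : 'I_N,
  ((A *t B) *m M) (mxtens_index (a, b)) (mxtens_index (c, d)) =
    gA a (a%:Z - sA) * gB b (b%:Z - sB) * F (a%:Z - sA) (b%:Z - sB) c d.
Proof.
move=> HM HA HB P1 P2 PA PB a b c d.
rewrite mxE sum_tens.
transitivity (\sum_(a' < N) (gA a a' * (gB b (b%:Z - sB) * F a' (b%:Z - sB) c d))
                 * dl (a'%:Z - (a%:Z - sA))).
  apply: eq_bigr => a' _.
  have E := sum_delta (fun y => gB b y * F a' y c d) (b%:Z - sB).
  cbv beta in E; rewrite -E; last by move=> x y H; rewrite (P2 _ _ _ _ _ H) (PB _ _ _ H).
  rewrite mulr_sumr mulr_suml; apply: eq_bigr => b' _.
  rewrite HM tensmxE HA HB !dlS; ring.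
have E := sum_delta (fun x => gA a x * (gB b (b%:Z - sB) * F x (b%:Z - sB) c d)) (a%:Z - sA).
cbv beta in E; rewrite E; first ring.
by move=> x y H; rewrite (PA _ _ _ H) (P1 _ _ _ _ _ H).
Qed.

Lemma ZmatE (a c : 'I_N) : Zmat R N a c = om ^ a%:Z * dl (a%:Z - c%:Z - 0).
Proof. by rewrite mxE subr0. Qed.

Lemma YmatE (a c : 'I_N) :
  Ymat R N a c = (omega_half R N 1 * om ^ c%:Z) * dl (a%:Z - c%:Z - 1).
Proof. by rewrite mxE. Qed.

Lemma idE (a c : 'I_N) : (1%:M : 'M[C]_N) a c = 1 * dl (a%:Z - c%:Z - 0).
Proof.
rewrite mxE subr0 mul1r deltaNE; case: eqVneq => [->|ne]; first by rewrite subrr dvdz0.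
by case: ifP => // H; case/eqP: ne; apply: ord_cong.
Qed.

Lemma dvdM (x y z : int) : (N%:Z %| x - y)%Z -> (N%:Z %| x * z - y * z)%Z.
Proof. by move=> H; rewrite (_ : x * z - y * z = (x - y) * z) ?dvdz_mulr //; ring. Qed.

Lemma wfun_cong (X Y Z : C) (x y : int) : (N%:Z %| x - y)%Z -> wfun N X Y Z x = wfun N X Y Z y.
Proof.
move=> H; have E : (x %% N)%Z = (y %% N)%Z by apply/eqP; rewrite eqz_mod_dvd.
by rewrite /wfun E.
Qed.

Lemma ohE (r : int) : omega_half R N r = om ^ ((Phalf N).+1%:Z * r).
Proof. by rewrite /omega_half -exprz_exp. Qed.

Definition Rf (hh X Y Z : C) (al be ga de : int) : C :=
  hh * om ^ (al * de) * wfun2 N X Y Z ga al * dl (ga + de - be).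

Lemma R6jE nroot ar yr am ym an yn : exists hh X Y Z, forall a b c d : 'I_N,
  R6j N nroot ar yr am ym an yn (mxtens_index (a, b)) (mxtens_index (c, d))
  = Rf hh X Y Z a b c d.
Proof.
do 4 eexists; move=> a b c d; rewrite mxE !mxtens_indexK; reflexivity.
Qed.

Lemma Rf_per1 (hh X Y Z : C) b c d : per (fun a => Rf hh X Y Z a b c d).
Proof.
move=> x y H; rewrite /Rf /wfun2 !ohE (om_cong _ _ (@dvdM _ _ d H)) (@wfun_cong _ _ _ (c - x) (c - y)).
  congr (_ * _ * (_ * _) * _); apply: om_cong.
  have -> : (Phalf N).+1%:Z * x ^+ 2 - (Phalf N).+1%:Z * y ^+ 2 =
     (x - y) * ((Phalf N).+1%:Z * (x + y)) by ring.
  by rewrite dvdz_mulr.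
have -> : c - x - (c - y) = - (x - y) by ring.
by rewrite rpredN.
Qed.

Lemma Rf_per2 (hh X Y Z : C) a c d : per (fun b => Rf hh X Y Z a b c d).
Proof.
move=> x y H; rewrite /Rf (@dl_cong (c + d - x) (c + d - y)) //.
have -> : c + d - x - (c + d - y) = - (x - y) by ring.
by rewrite rpredN.
Qed.

Lemma Rf_per3 (hh X Y Z : C) a b d : per (fun c => Rf hh X Y Z a b c d).
Proof.
move=> x y H; rewrite /Rf /wfun2 (@dl_cong (x + d - b) (y + d - b)) ?(@wfun_cong _ _ _ (x - a) (y - a)) //.
  by have -> : x - a - (y - a) = x - y by ring.
by have -> : x + d - b - (y + d - b) = x - y by ring.
Qed.

Lemma Rf_per4 (hh X Y Z : C) a b c : per (Rf hh X Y Z a b c).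
Proof.
move=> x y H; rewrite /Rf (@dl_cong (c + x - b) (c + y - b)).
  rewrite (@om_cong (a * x) (a * y)) //.
  by rewrite (_ : a * x - a * y = (x - y) * a) ?dvdz_mulr //; ring.
by have -> : c + x - b - (c + y - b) = x - y by ring.
Qed.

Lemma final (K : C) (x1 x2 k t s : int) :
  x1 - x2 = t * k + s * N%:Z -> K * om ^ x1 * dl k = K * om ^ x2 * dl k.
Proof.
move=> E; rewrite deltaNE; case: ifP => H; last by rewrite !mulr0.
congr (_ * _ * _); apply: om_cong; rewrite E rpredD //.
  by rewrite dvdz_mull.
by rewrite dvdz_mull // dvdzz.
Qed.

Lemma final2 (K : C) (xs ys : seq int) (k t s : int) :
  \sum_(x <- xs) x - \sum_(y <- ys) y = t * k + s * N%:Z ->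
  K * \prod_(x <- xs) om ^ x * dl k = K * \prod_(y <- ys) om ^ y * dl k.
Proof.
have P : forall zs : seq int, \prod_(z <- zs) om ^ z = om ^ (\sum_(z <- zs) z).
  elim=> [|z zs IH]; first by rewrite !big_nil.
  by rewrite !big_cons IH expfzDr // om0.
by rewrite !P; apply: final.
Qed.

Lemma main3 nroot ar yr am ym an yn : odd N ->
  let Rm := R6j N nroot ar yr am ym an yn in
  let Z1 := Zmat R N *t (1%:M : 'M[R[i]]_N) in
  let Z2 := (1%:M : 'M[R[i]]_N) *t Zmat R N in
  let Y1 := Ymat R N *t (1%:M : 'M[R[i]]_N) in
  let Y2 := (1%:M : 'M[R[i]]_N) *t Ymat R N in
  [/\ Rm *m (Z1 *m Y2) = (Z1 *m Y2) *m Rm,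
      Rm *m Y1 = (Y1 *m Y2) *m Rm
    & Rm *m (Z1 *m Z2) = Z2 *m Rm].
Proof.
move=> oddN Rm Z1 Z2 Y1 Y2.
have [hh [X [Y [Z HR]]]] := R6jE nroot ar yr am ym an yn.
have hN : N%:Z = 2 * (Phalf N).+1%:Z - 1.
  rewrite /Phalf -[in LHS](odd_double_half N) oddN -muln2 -(addn1 (N./2)) !PoszD PoszM /=; ring.
have PZ1 : forall c : int, per (fun a : int => om ^ a) by move=> c x y H; exact: om_cong.
have PZ2 : forall a : int, per (fun c : int => om ^ a) by [].
have PY1 : forall c : int, per (fun a : int => omega_half R N 1 * om ^ c) by [].
have PY2 : forall a : int, per (fun c : int => omega_half R N 1 * om ^ c).
  by move=> a x y H; rewrite (om_cong _ _ H).
have PI1 : forall c : int, per (fun a : int => (1 : C)) by [].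
have PI2 : forall a : int, per (fun c : int => (1 : C)) by [].
have P1 := Rf_per1 hh X Y Z. have P2 := Rf_per2 hh X Y Z.
have P3 := Rf_per3 hh X Y Z. have P4 := Rf_per4 hh X Y Z.
split.
- rewrite /Z1 /Y2 tensmx_mul mulmx1 mul1mx.
  apply/matrixP => i j; case: (mxtens_indexP i) => a b; case: (mxtens_indexP j) => c d.
  rewrite (@mul_right Rm (Rf hh X Y Z) _ _ (fun a _ => om ^ a) (fun _ c => omega_half R N 1 * om ^ c) 0 1 HR ZmatE YmatE P3 P4 PZ1 PY1).
  rewrite (@mul_left Rm (Rf hh X Y Z) _ _ (fun a _ => om ^ a) (fun _ c => omega_half R N 1 * om ^ c) 0 1 HR ZmatE YmatE P1 P2 PZ2 PY2).
  rewrite /Rf /wfun2 !ohE ?subr0 ?addr0.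
  rewrite (_ : c%:Z + d%:Z - (b%:Z - 1) = c%:Z + (d%:Z + 1) - b%:Z); last by ring.
  set W := wfun N X Y Z _. set K := dl _. set Q := (Phalf N).+1%:Z.
  transitivity (hh * W * \prod_(x <- [:: a%:Z * (d%:Z + 1); Q * a%:Z ^+ 2; c%:Z; Q * 1; d%:Z]) om ^ x * K).
    by rewrite !big_cons big_nil; ring.
  symmetry; transitivity (hh * W * \prod_(x <- [:: a%:Z; Q * 1; b%:Z - 1; a%:Z * d%:Z; Q * a%:Z ^+ 2]) om ^ x * K).
    by rewrite !big_cons big_nil; ring.
  apply: (final2 _ _ _ _ (-1) 0).
  by rewrite !big_cons !big_nil; ring.
- rewrite /Y1 /Y2 tensmx_mul mulmx1 mul1mx.
  apply/matrixP => i j; case: (mxtens_indexP i) => a b; case: (mxtens_indexP j) => c d.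
  rewrite (@mul_right Rm (Rf hh X Y Z) _ _ (fun _ c => omega_half R N 1 * om ^ c) (fun _ _ => 1) 1 0 HR YmatE idE P3 P4 PY1 PI1).
  rewrite (@mul_left Rm (Rf hh X Y Z) _ _ (fun _ c => omega_half R N 1 * om ^ c) (fun _ c => omega_half R N 1 * om ^ c) 1 1 HR YmatE YmatE P1 P2 PY2 PY2).
  rewrite /Rf /wfun2 !ohE ?subr0 ?addr0.
  rewrite (_ : c%:Z - (a%:Z - 1) = c%:Z + 1 - a%:Z); last by ring.
  rewrite (_ : c%:Z + d%:Z - (b%:Z - 1) = c%:Z + 1 + d%:Z - b%:Z); last by ring.
  set W := wfun N X Y Z _. set K := dl _. set Q := (Phalf N).+1%:Z.
  transitivity (hh * W * \prod_(x <- [:: a%:Z * d%:Z; Q * a%:Z ^+ 2; Q * 1; c%:Z]) om ^ x * K).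
    by rewrite !big_cons big_nil; ring.
  symmetry; transitivity (hh * W * \prod_(x <- [:: Q * 1; a%:Z - 1; Q * 1; b%:Z - 1; (a%:Z - 1) * d%:Z; Q * (a%:Z - 1) ^+ 2]) om ^ x * K).
    by rewrite !big_cons big_nil; ring.
  apply: (final2 _ _ _ _ (-1) (1 - a%:Z)).
  by rewrite !big_cons !big_nil hN; ring.
- rewrite /Z1 /Z2 tensmx_mul mulmx1 mul1mx.
  apply/matrixP => i j; case: (mxtens_indexP i) => a b; case: (mxtens_indexP j) => c d.
  rewrite (@mul_right Rm (Rf hh X Y Z) _ _ (fun a _ => om ^ a) (fun a _ => om ^ a) 0 0 HR ZmatE ZmatE P3 P4 PZ1 PZ1).
  rewrite (@mul_left Rm (Rf hh X Y Z) _ _ (fun _ _ => 1) (fun a _ => om ^ a) 0 0 HR idE ZmatE P1 P2 PI2 PZ2).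
  rewrite /Rf /wfun2 !ohE ?subr0 ?addr0.
  set W := wfun N X Y Z _. set K := dl _. set Q := (Phalf N).+1%:Z.
  transitivity (hh * W * \prod_(x <- [:: a%:Z * d%:Z; Q * a%:Z ^+ 2; c%:Z; d%:Z]) om ^ x * K).
    by rewrite !big_cons big_nil; ring.
  symmetry; transitivity (hh * W * \prod_(x <- [:: b%:Z; a%:Z * d%:Z; Q * a%:Z ^+ 2]) om ^ x * K).
    by rewrite !big_cons big_nil; ring.
  apply: (final2 _ _ _ _ (-1) 0).
  by rewrite !big_cons !big_nil; ring.
Qed.

End Aux.



Local Close Scope complex_scope.

Theorem lemma6p10 (R : realType) (N : nat) (nroot : R[i] -> R[i])
    (ar yr am ym an yn : R[i]) :
  (3 <= N)%N -> odd N ->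
  (forall u : R[i], nroot u ^+ N = u) ->
  ar != 0 -> yr != 0 -> am != 0 -> ym != 0 -> an != 0 -> yn != 0 ->
  regular_triple N ar yr am ym an yn ->
  standing_convention N nroot ar yr am ym an yn ->
  let Rm := R6j N nroot ar yr am ym an yn in
  let Z1 := Zmat R N *t (1%:M : 'M[R[i]]_N) in
  let Z2 := (1%:M : 'M[R[i]]_N) *t Zmat R N in
  let Y1 := Ymat R N *t (1%:M : 'M[R[i]]_N) in
  let Y2 := (1%:M : 'M[R[i]]_N) *t Ymat R N in
  [/\ Rm *m (Z1 *m Y2) = (Z1 *m Y2) *m Rm,
      Rm *m Y1 = (Y1 *m Y2) *m Rm
    & Rm *m (Z1 *m Z2) = Z2 *m Rm].
Proof.
move=> N3 oddN _ _ _ _ _ _ _ _ _.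
apply: main3 => //.
by apply: leq_trans N3.
Qed.
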